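(* Let $\langle S,L,\tau,\ell\rangle$ be a labelled Markov chain and $P\in\mathcal{P}_\tau$. The following are equivalent: (1) $P$ is optimal, i.e. $\gamma_P(s,t)=\delta_\tau(s,t)$ for all $s,t\in S$; (2) $\Gamma_P(\delta_\tau)=\delta_\tau$; (3) $\Gamma_P(\delta_\tau)\le\delta_\tau$ pointwise.
   Context: Labelled Markov chain: finite $S$, finite $L$, $\tau:S\to\mathcal{D}(S)$, $\ell:S\to L$. $\Omega(\mu,\nu)$ = couplings. $S^2_\Delta=\{(s,s)\}$, $S^2_1=\{(s,t)\mid\ell(s)\ne\ell(t)\}$. $\mathcal{P}_\tau$ = set of policies $P:S\times S\to\mathcal{D}(S\times S)$ with $P(s,t)\in\Omega(\tau(s),\tau(t))$ for $(s,t)\notin S^2_1$ and $P(s,t)$ the point mass at $(s,t)$ for $(s,t)\in S^2_1$. For $d:S\times S\to[0,1]$, $\Gamma_P(d)(s,t)=1$ if $(s,t)\in S^2_1$ and $\Gamma_P(d)(s,t)=\sum_{u,v}P(s,t)(u,v)\,d(u,v)$ otherwise; $\gamma_P$ is the least fixed point of $\Gamma_P$ (equal to the probability of reaching $S^2_1$ from $(s,t)$ in the Markov chain $\langle S\times S,P\rangle$). $\delta_\tau$ is the least fixed point of $\Delta_\tau$, where $\Delta_\tau(d)(s,t)=1$ if $\ell(s)\ne\ell(t)$ and $\inf_{\omega\in\Omega(\tau(s),\tau(t))}\sum_{u,v}\omega(u,v)d(u,v)$ otherwise; it is known that $\delta_\tau=\min_{P\in\mathcal{P}_\tau}\gamma_P$.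 *)

(* Defs.v *)
From HB Require Import structures.
From mathcomp Require Import all_boot all_order all_algebra.
From mathcomp Require Import classical_sets reals.
Set Implicit Arguments. Unset Strict Implicit. Unset Printing Implicit Defensive.
Import Order.TTheory GRing.Theory Num.Theory.
Local Open Scope classical_set_scope.
Local Open Scope ring_scope.

Section LMC.
Variables (R : realType) (S L : finType).

Definition is_distr (T : finType) (mu : T -> R) : Prop :=
  (forall x, 0 <= mu x) /\ \sum_(x : T) mu x = 1.

(* Omega(mu, nu): couplings of mu and nu, as distributions on S x S
   written in curried form w u v = w(u,v) *)
Definition coupling (mu nu : S -> R) (w : S -> S -> R) : Prop :=
  (forall u v, 0 <= w u v) /\
  (forall u, \sum_(v : S) w u v = mu u) /\
  (forall v, \sum_(u : S) w u v = nu v).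

Definition diff_label (l : S -> L) (s t : S) : bool := l s != l t.

(* P_tau: policies P (s,t) (u,v) written P s t u v *)
Definition is_policy (tau : S -> S -> R) (l : S -> L)
    (P : S -> S -> S -> S -> R) : Prop :=
  forall s t,
    (~~ diff_label l s t -> coupling (tau s) (tau t) (P s t)) /\
    (diff_label l s t -> forall u v, P s t u v = (((u == s) && (v == t)) : bool)%:R).

Definition GammaP (l : S -> L) (P : S -> S -> S -> S -> R)
    (d : S -> S -> R) : S -> S -> R :=
  fun s t => if diff_label l s t then 1
             else \sum_(u : S) \sum_(v : S) P s t u v * d u v.

Definition Delta (tau : S -> S -> R) (l : S -> L)
    (d : S -> S -> R) : S -> S -> R :=
  fun s t => if diff_label l s t then 1
             else inf [set \sum_(u : S) \sum_(v : S) w u v * d u v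
                       | w in [set w | coupling (tau s) (tau t) w]].

Definition unit_valued (d : S -> S -> R) : Prop :=
  forall u v, 0 <= d u v <= 1.

(* least fixed point of a monotone F on the complete lattice [0,1]^(S x S),
   given (Knaster--Tarski) as the pointwise infimum of its prefixed points *)
Definition lfp (F : (S -> S -> R) -> (S -> S -> R)) : S -> S -> R :=
  fun s t => inf [set d s t | d in
                  [set d | unit_valued d /\ forall u v, F d u v <= d u v]].

Definition gammaP (l : S -> L) (P : S -> S -> S -> S -> R) :=
  lfp (GammaP l P).

Definition delta (tau : S -> S -> R) (l : S -> L) := lfp (Delta tau l).

End LMC.

(* Main.v *)
Require Import Defs.
From HB Require Import structures.
From mathcomp Require Import all_boot all_order all_algebra.
From mathcomp Require Import classical_sets reals.
From Stdlib Require Import FunctionalExtensionality.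
Import Order.TTheory GRing.Theory Num.Theory.
Set Implicit Arguments. Unset Strict Implicit.
Local Open Scope ring_scope.
Local Open Scope classical_set_scope.

Section Helpers.
Variables (R : realType) (S L : finType).

Lemma inf_le_mem (E : set R) x : (forall y, E y -> 0 <= y) -> E x -> inf E <= x.
Proof. move=> H Ex; apply: (ge_inf _ Ex); by exists 0. Qed.

Lemma lfp_le (F : (S -> S -> R) -> (S -> S -> R)) d :
  unit_valued d -> (forall u v, F d u v <= d u v) ->
  forall s t, lfp F s t <= d s t.
Proof.
move=> Hd HF s t; apply: inf_le_mem; last by exists d.
by move=> y [d' [Hd' _] <-]; case/andP: (Hd' s t).
Qed.

Lemma lfp_ge0 (F : (S -> S -> R) -> (S -> S -> R)) d :
  unit_valued d -> (forall u v, F d u v <= d u v) ->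
  forall s t, 0 <= lfp F s t.
Proof.
move=> Hd HF s t; apply: lb_le_inf; first by exists (d s t), d.
by move=> y [d' [Hd' _] <-]; case/andP: (Hd' s t).
Qed.

Lemma lfp_unit (F : (S -> S -> R) -> (S -> S -> R)) :
  (forall d, unit_valued d -> unit_valued (F d)) -> unit_valued (lfp F).
Proof.
move=> Hu.
have H1 : unit_valued (fun _ _ : S => (1:R)) by move=> u v; rewrite ler01 lexx.
have H1' : forall u v, F (fun _ _ => 1) u v <= 1 by move=> u v; case/andP: (Hu _ H1 u v).
move=> s t; apply/andP; split; first exact: (lfp_ge0 H1 H1').
exact: (lfp_le H1 H1').
Qed.

Lemma lfp_prefix (F : (S -> S -> R) -> (S -> S -> R)) :
  (forall d, unit_valued d -> unit_valued (F d)) ->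
  (forall d1 d2, unit_valued d1 -> unit_valued d2 ->
     (forall u v, d1 u v <= d2 u v) -> forall u v, F d1 u v <= F d2 u v) ->
  forall s t, F (lfp F) s t <= lfp F s t.
Proof.
move=> Hu Hm s t.
have H1 : unit_valued (fun _ _ : S => (1:R)) by move=> u v; rewrite ler01 lexx.
apply: lb_le_inf.
  by exists 1, (fun _ _ => 1) => //; split => // u v; case/andP: (Hu _ H1 u v).
move=> y [d [Hd HF] <-].
apply: le_trans (HF s t); apply: Hm => //; first exact: lfp_unit.
exact: lfp_le.
Qed.

Lemma lfp_fix (F : (S -> S -> R) -> (S -> S -> R)) :
  (forall d, unit_valued d -> unit_valued (F d)) ->
  (forall d1 d2, unit_valued d1 -> unit_valued d2 ->
     (forall u v, d1 u v <= d2 u v) -> forall u v, F d1 u v <= F d2 u v) ->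
  forall s t, F (lfp F) s t = lfp F s t.
Proof.
move=> Hu Hm s t; apply/eqP; rewrite eq_le lfp_prefix //=.
have HU : unit_valued (lfp F) by apply: lfp_unit.
apply: (lfp_le ((Hu) _ HU)).
apply: (Hm) => //; first exact: (Hu _ HU).
exact: (lfp_prefix Hu Hm).
Qed.

End Helpers.

Theorem mainTheorem14 (R : realType) (S L : finType)
    (tau : S -> S -> R) (l : S -> L)
    (Htau : forall s, is_distr (tau s))
    (P : S -> S -> S -> S -> R) (HP : is_policy tau l P) :
  ((forall s t, gammaP l P s t = delta tau l s t) <->
   (forall s t, GammaP l P (delta tau l) s t = delta tau l s t)) /\
  ((forall s t, GammaP l P (delta tau l) s t = delta tau l s t) <->
   (forall s t, GammaP l P (delta tau l) s t <= delta tau l s t)).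
Proof.
have Gu : forall d, unit_valued d -> unit_valued (GammaP l P d).
  move=> d Hd s t; rewrite /GammaP; case: ifP => Hdl; first by rewrite ler01 lexx.
  have [H0 [Hr _]] := (HP s t).1 (negbT Hdl).
  apply/andP; split.
    apply: sumr_ge0 => u _; apply: sumr_ge0 => v _; apply: mulr_ge0 => //.
    by case/andP: (Hd u v).
  apply: (@le_trans _ _ (\sum_u \sum_v P s t u v)).
    apply: ler_sum => u _; apply: ler_sum => v _.
    by apply: ler_piMr => //; case/andP: (Hd u v).
  under eq_bigr => u _ do rewrite Hr.
  by rewrite (Htau s).2.
have Gm : forall d1 d2, unit_valued d1 -> unit_valued d2 ->
     (forall u v, d1 u v <= d2 u v) -> forall u v, GammaP l P d1 u v <= GammaP l P d2 u v.
  move=> d1 d2 _ _ H s t; rewrite /GammaP; case: ifP => Hdl //.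
  have [H0 _] := (HP s t).1 (negbT Hdl).
  apply: ler_sum => u _; apply: ler_sum => v _; exact: ler_wpM2l.
have gfix := lfp_fix Gu Gm.
have gu : unit_valued (gammaP l P) := lfp_unit Gu.
have DG : forall u v, Delta tau l (gammaP l P) u v <= gammaP l P u v.
  move=> s t; apply: le_trans (lfp_prefix Gu Gm s t).
  rewrite /Delta /GammaP; case: ifP => Hdl //.
  have Hc := (HP s t).1 (negbT Hdl).
  apply: inf_le_mem; last by exists (P s t).
  move=> y [w [Hw _] <-]; apply: sumr_ge0 => u _; apply: sumr_ge0 => v _.
  by apply: mulr_ge0; [exact: Hw | case/andP: (gu u v)].
have dg := lfp_le gu DG.
have d0 := lfp_ge0 gu DG.
have du : unit_valued (delta tau l).
  move=> s t; rewrite d0 /=; apply: le_trans (dg s t) _; by case/andP: (gu s t).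
have key : (forall s t, GammaP l P (delta tau l) s t <= delta tau l s t) ->
    forall s t, gammaP l P s t = delta tau l s t.
  move=> H s t; apply/eqP; rewrite eq_le dg andbT; exact: lfp_le.
have k1 : (forall s t, gammaP l P s t = delta tau l s t) ->
    forall s t, GammaP l P (delta tau l) s t = delta tau l s t.
  move=> H s t.
  have -> : delta tau l = gammaP l P by do 2 (apply: functional_extensionality => ?); rewrite H.
  exact: gfix.
split; split => //.
- move=> H; apply: key => s t; by rewrite H.
- by move=> H s t; rewrite H.
- by move=> H; apply: k1; apply: key.
Qed.
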